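(* With notation as in the context, the left braces $B_{j_0,\dots,j_{n-1}}$ and $\mathcal G(X,r_{j_0,\dots,j_{n-1}})$ (with its natural left brace structure) are isomorphic if and only if the bilinear form $b_{j_0,\dots,j_{n-1}}$ is non-singular, i.e. the only $u\in(\mathbb Z/(n))^n$ with $b_{j_0,\dots,j_{n-1}}(u,v)=0$ for all $v$ is $u=0$.
   Context: Let $n>1$ and let $e_i$ ($i\in\mathbb Z/(n)$) be the standard basis of the free $\mathbb Z/(n)$-module $(\mathbb Z/(n))^n$, indices in $\mathbb Z/(n)$. Let $\alpha(i)(e_k)=e_{i+k}$. Given $j_0,\dots,j_{n-1}\in\mathbb Z/(n)$ with $j_i=j_{-i}$, let $b=b_{j_0,\dots,j_{n-1}}$ be the bilinear form with $b(e_k,e_l)=j_{l-k}$. $B_{j_0,\dots,j_{n-1}}$ is the set $(\mathbb Z/(n))^n\times\mathbb Z/(n)$ with $(u,i)\circ(v,j)=(u+\alpha(i)(v),i+j)$ and $(u,i)+(v,j)=(u+v,i+j+b(u,v))$, a left brace with lambda map $\lambda_{(u,i)}(v,j)=(\alpha(i)(v),\ j-b(u,\alpha(i)(v)))$. Let $x_{ij}=(e_i,j)$, $X=\{x_{ij}\}$, and $r_{j_0,\dots,j_{n-1}}(x,y)=(\lambda_x(y),\lambda^{-1}_{\lambda_x(y)}(x))$ on $X\times X$; it is a solution of the YBE with $\sigma_x=\lambda_x|_X$. A left brace is a set with an abelian group $+$ and a group $\circ$ satisfying $a\circ(b+c)+a=a\circ b+a\circ c$; isomorphisms of left braces are bijections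 preserving both operations. For a solution $(X,r)$, $r(x,y)=(\sigma_x(y),\gamma_y(x))$, $\mathcal G(X,r)=\langle\sigma_x\rangle\le\mathrm{Sym}_X$; the structure group $G(X,r)$ (generators $X$, relations $xy=\sigma_x(y)\gamma_y(x)$) carries a left brace structure with additive group free abelian on $X$ and $\lambda_x(y)=\sigma_x(y)$; $x\mapsto\sigma_x$ extends to a surjective homomorphism $\phi:G(X,r)\to\mathcal G(X,r)$ with kernel the socle $\{g: \lambda_g=\mathrm{id}\}$ of $G(X,r)$, and the natural left brace structure on $\mathcal G(X,r)$ is the unique one making $\phi$ a brace homomorphism. *)

(* Defs.v *)
From HB Require Import structures.
From mathcomp Require Import all_boot all_order all_fingroup all_algebra.
Set Implicit Arguments. Unset Strict Implicit. Unset Printing Implicit Defensive.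
Import GRing.Theory.
Local Open Scope ring_scope.

Section Defs.
Variable n : nat.

Definition vec := {ffun 'Z_n -> 'Z_n}.
Definition vadd (u v : vec) : vec := [ffun k => u k + v k].
Definition vzero : vec := [ffun => 0].
Definition ev (i : 'Z_n) : vec := [ffun k => (k == i)%:R].
(* alpha(i)(e_k) = e_{i+k}, extended linearly *)
Definition alpha (i : 'Z_n) (v : vec) : vec := [ffun k => v (k - i)].
Definition bform (J : 'Z_n -> 'Z_n) (u v : vec) : 'Z_n :=
  \sum_(k : 'Z_n) \sum_(l : 'Z_n) u k * v l * J (l - k).

Definition Bt := (vec * 'Z_n)%type.
Definition Bcirc (a b : Bt) : Bt := (vadd a.1 (alpha a.2 b.1), a.2 + b.2).
Definition Badd (J : 'Z_n -> 'Z_n) (a b : Bt) : Bt :=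
  (vadd a.1 b.1, a.2 + b.2 + bform J a.1 b.1).
Definition Blam (J : 'Z_n -> 'Z_n) (a b : Bt) : Bt :=
  (alpha a.2 b.1, b.2 - bform J a.1 (alpha a.2 b.1)).

(* X is indexed by pairs (i,j), x_ij = (e_i, j) *)
Definition Xt := ('Z_n * 'Z_n)%type.
Definition emb (x : Xt) : Bt := (ev x.1, x.2).

(* sigma_{x_ij}(x_kl) = x_{j+k, l - J(j+k-i)}, i.e. lambda restricted to X
   (see lemma sigma_funE below) *)
Definition sigma_fun (J : 'Z_n -> 'Z_n) (x y : Xt) : Xt :=
  (x.2 + y.1, y.2 - J (x.2 + y.1 - x.1)).

Lemma sigma_fun_inj J x : injective (sigma_fun J x).
Proof.
move=> [k l] [k' l'] E.
have Ek : k = k' by apply: (addrI x.2); exact: (congr1 fst E).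
subst k'; have El := congr1 snd E; rewrite /= in El.
by rewrite (addIr _ El).
Qed.

Definition sigma (J : 'Z_n -> 'Z_n) (x : Xt) : {perm Xt} :=
  perm (@sigma_fun_inj J x).

Definition calG (J : 'Z_n -> 'Z_n) : {set {perm Xt}} :=
  (<<[set sigma J x | x : Xt]>>)%g.

End Defs.

Lemma sigma_funE (n : nat) (J : 'Z_n -> 'Z_n) (x y : Xt n) :
  emb (sigma_fun J x y) = Blam J (emb x) (emb y).
Proof.
case: x y => [i j] [k l]; rewrite /emb /Blam /sigma_fun /=.
have Ea : alpha j (ev k) = ev (j + k).
  by apply/ffunP => m; rewrite !ffunE subr_eq [k + j]addrC.
rewrite Ea; congr (_, _ - _).
rewrite /bform (bigD1 i) //= [X in _ = _ + X]big1 => [|a Ha]; last first.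
  by apply: big1 => c _; rewrite !ffunE (negPf Ha) !mul0r.
rewrite addr0 (bigD1 (j + k)) //= [X in _ = _ + X]big1 => [|c Hc]; last first.
  by rewrite !ffunE (negPf Hc) mulr0 mul0r.
by rewrite !ffunE !eqxx addr0 !mul1r.
Qed.

Definition is_group_op (T : Type) (op : T -> T -> T) : Prop :=
  associative op /\
  exists e : T, left_id e op /\ right_id e op /\
     forall a, exists a', op a a' = e /\ op a' a = e.

Definition is_left_brace (G : zmodType) (circ : G -> G -> G) : Prop :=
  is_group_op circ /\
  forall a b c : G, (circ a (b + c) + a = circ a b + circ a c)%R.

Definition brace_lam (G : zmodType) (circ : G -> G -> G) (a b : G) : G :=
  (- a + circ a b)%R.

(* [natural_add J add]: [add] is the addition of the natural left brace
   structure on calG J, i.e. the map phi : G(X,r) -> calG J with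
   phi(x) = sigma_x is a homomorphism of left braces, where G(X,r) is the
   structure group with its left brace structure: additive group free
   abelian on X (iota) and lambda_x(y) = sigma_x(y).  The multiplication
   on calG J is composition: (g o h)(z) = g (h z), which in MathComp's
   convention for {perm _} is written h * g. *)
Definition natural_add (n : nat) (J : 'Z_n -> 'Z_n)
  (add : {perm Xt n} -> {perm Xt n} -> {perm Xt n}) : Prop :=
  exists (G : zmodType) (circ : G -> G -> G) (iota : Xt n -> G)
         (phi : G -> {perm Xt n}),
    is_left_brace circ /\
    bijective (fun c : {ffun Xt n -> int} => (\sum_x (iota x) *~ c x)%R) /\
    (forall x y, brace_lam circ (iota x) (iota y) = iota (sigma J x y)) /\
    (forall x, phi (iota x) = sigma J x) /\
    (forall a b, phi (circ a b) = (phi b * phi a)%g) /\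
    (forall a b, phi (a + b)%R = add (phi a) (phi b)).

Definition brace_iso_B_calG (n : nat) (J : 'Z_n -> 'Z_n)
  (add : {perm Xt n} -> {perm Xt n} -> {perm Xt n}) : Prop :=
  exists f : Bt n -> {perm Xt n},
    [/\ forall a, f a \in calG J,
        injective f,
        forall g, g \in calG J -> exists a, f a = g,
        forall a b, f (Badd J a b) = add (f a) (f b)
      & forall a b, f (Bcirc a b) = (f b * f a)%g].

Definition nonsingular (n : nat) (J : 'Z_n -> 'Z_n) : Prop :=
  forall u : vec n, (forall v : vec n, bform J u v = 0) -> u = vzero n.

(* Main.v *)
Require Import Defs.
From HB Require Import structures.
From mathcomp Require Import all_boot all_order all_fingroup all_algebra.
From mathcomp Require Import ring.
Set Implicit Arguments. Unset Strict Implicit. Unset Printing Implicit Defensive.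
Import GRing.Theory.
Local Open Scope ring_scope.

Definition cu (n : nat) (J : 'Z_n -> 'Z_n) (u : vec n) (m : 'Z_n) : 'Z_n :=
  \sum_k u k * J (m - k).

Definition fB_fun (n : nat) (J : 'Z_n -> 'Z_n) (a : Bt n) (y : Xt n) : Xt n :=
  (a.2 + y.1, y.2 - cu J a.1 (a.2 + y.1)).

Lemma fB_fun_inj n J a : injective (@fB_fun n J a).
Proof.
move=> [k l] [k' l'] E.
have Ek : k = k' by apply: (addrI a.2); exact: (congr1 fst E).
subst k'; have El := congr1 snd E; rewrite /= in El.
by rewrite (addIr _ El).
Qed.

Definition fB n J (a : Bt n) : {perm Xt n} := perm (@fB_fun_inj n J a).

Lemma fBE n J (a : Bt n) y : fB J a y = (a.2 + y.1, y.2 - cu J a.1 (a.2 + y.1)).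
Proof. by rewrite permE. Qed.

Section BS.
Variables (n : nat) (J : 'Z_n -> 'Z_n).
Implicit Types (u v w : vec n).

Lemma alpha0 u : alpha 0 u = u.
Proof. by apply/ffunP => k; rewrite ffunE subr0. Qed.

Lemma alpha_ev (i k : 'Z_n) : alpha i (ev k) = ev (i + k).
Proof. by apply/ffunP => m; rewrite !ffunE subr_eq [k + i]addrC. Qed.

Lemma bform_cu u w : bform J u w = \sum_l w l * cu J u l.
Proof.
rewrite /bform exchange_big; apply: eq_bigr => l _.
rewrite /cu mulr_sumr; apply: eq_bigr => k _.
by rewrite mulrCA mulrA.
Qed.

Lemma cu_ev (i m : 'Z_n) : cu J (ev i) m = J (m - i).
Proof.
rewrite /cu (bigD1 i) //= big1 => [|k Hk]; last by rewrite ffunE (negPf Hk) mul0r.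
by rewrite ffunE eqxx mul1r addr0.
Qed.

Lemma bform_ev u m : bform J u (ev m) = cu J u m.
Proof.
rewrite bform_cu (bigD1 m) //= big1 => [|k Hk]; last by rewrite ffunE (negPf Hk) mul0r.
by rewrite ffunE eqxx mul1r addr0.
Qed.

Lemma cu_add u v m : cu J (vadd u v) m = cu J u m + cu J v m.
Proof. by rewrite /cu -big_split; apply: eq_bigr => k _; rewrite ffunE mulrDl. Qed.

Lemma cu_alpha (i : 'Z_n) v m : cu J (alpha i v) m = cu J v (m - i).
Proof.
rewrite /cu (reindex_inj (addIr i)) /=; apply: eq_bigr => k _. idtac.
by rewrite ffunE addrK opprD addrA addrAC.
Qed.

Lemma cu_zero m : cu J (vzero n) m = 0.
Proof. by rewrite /cu big1 // => k _; rewrite ffunE mul0r. Qed.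

Lemma bform_addl u v w : bform J (vadd u v) w = bform J u w + bform J v w.
Proof. by rewrite !bform_cu -big_split; apply: eq_bigr => l _; rewrite cu_add mulrDr. Qed.

Lemma bform_addr u v w : bform J u (vadd v w) = bform J u v + bform J u w.
Proof. by rewrite !bform_cu -big_split; apply: eq_bigr => l _; rewrite ffunE mulrDl. Qed.

Lemma bform_0r u : bform J u (vzero n) = 0.
Proof. by rewrite bform_cu big1 // => l _; rewrite ffunE mul0r. Qed.

Lemma fB_emb (x : Xt n) : fB J (emb x) = sigma J x.
Proof. by apply/permP => y; rewrite fBE /sigma permE /sigma_fun /= cu_ev. Qed.

Lemma fB_circ (a b : Bt n) : fB J (Bcirc a b) = (fB J b * fB J a)%g.
Proof.
apply/permP => y; rewrite permM !fBE /= cu_add cu_alpha.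
have -> : a.2 + b.2 + y.1 - a.2 = b.2 + y.1 by ring.
rewrite !addrA; congr (_, _); ring.
Qed.

Lemma Badd_assoc (a b c : Bt n) : Badd J (Badd J a b) c = Badd J a (Badd J b c).
Proof.
rewrite /Badd /=; congr (_, _).
  by apply/ffunP => k; rewrite !ffunE addrA.
rewrite bform_addl bform_addr; ring.
Qed.

Lemma Badd0 (a : Bt n) : Badd J a (vzero n, 0) = a.
Proof.
case: a => u i; rewrite /Badd /= bform_0r !addr0; congr (_, _).
by apply/ffunP => k; rewrite !ffunE addr0.
Qed.

Lemma fB0 : fB J (vzero n, 0) = 1%g.
Proof. by apply/permP => y; rewrite fBE perm1 /= add0r cu_zero subr0; case: y. Qed.

End BS.

Definition nY (n : nat) (J : 'Z_n -> 'Z_n) (y : Xt n) : Bt n := ([ffun k => - ev y.1 k], - y.2 + J 0).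

Section BS2.
Variables (n : nat) (J : 'Z_n -> 'Z_n).

Lemma Bplus (a : Bt n) (x y : Xt n) : fB J a x = y ->
  fB J (Badd J a (emb y)) = (sigma J x * fB J a)%g.
Proof.
move=> <-; rewrite -fB_emb -fB_circ fBE; congr (fB J _).
case: a x => u i [k l]; rewrite /Badd /Bcirc /emb /= alpha_ev bform_ev; congr (_, _).
ring.
Qed.

Lemma Bminus (a : Bt n) (z w y : Xt n) : fB J a z = y -> sigma J w z = w ->
  fB J (Badd J a (nY J y)) = ((sigma J w)^-1 * fB J a)%g.
Proof.
move=> Hy Hw.
suff E : Bcirc (Badd J a (nY J y)) (emb w) = a.
  by rewrite -{2}E fB_circ fB_emb mulgA mulVg mul1g.
move: Hw; rewrite /sigma permE /sigma_fun => Hw.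
have Hw1 : w.2 + z.1 = w.1 by exact: (congr1 fst Hw).
have Hw2 : z.2 - J 0 = w.2.
  by have := congr1 snd Hw; rewrite /= Hw1 subrr.
move: Hy; rewrite fBE => <-.
case: a w z Hw1 Hw2 {Hw} => u i [w1 w2] [z1 z2] /= Hw1 Hw2.
rewrite /Badd /Bcirc /nY /emb /= alpha_ev; congr (_, _).
  apply/ffunP => k; rewrite !ffunE.
  have -> : i + (- (z2 - cu J u (i + z1)) + J 0) +
      bform J u [ffun k0 => - ev (i + z1) k0] + w1 = i + z1.
    rewrite bform_cu.
    have -> : \sum_l [ffun k0 => - ev (i + z1) k0] l * cu J u l = - cu J u (i + z1).
      rewrite (bigD1 (i + z1)) //= big1 => [|l Hl]; last by rewrite !ffunE (negPf Hl) oppr0 mul0r.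
      by rewrite !ffunE eqxx mulN1r addr0.
    rewrite -Hw1 -Hw2; ring.
  by rewrite subrK.
rewrite bform_cu.
have -> : \sum_l [ffun k0 => - ev (i + z1) k0] l * cu J u l = - cu J u (i + z1).
  rewrite (bigD1 (i + z1)) //= big1 => [|l Hl]; last by rewrite !ffunE (negPf Hl) oppr0 mul0r.
  by rewrite !ffunE eqxx mulN1r addr0.
rewrite -Hw2; ring.
Qed.

Lemma fB_inj : nonsingular J -> injective (fB J).
Proof.
move=> Hns [u i] [v j] E.
have E0 := congr1 (fun p : {perm Xt n} => p (0, 0)) E; rewrite /= !fBE /= in E0.
have Eij : i = j by move: (congr1 fst E0); rewrite /= !addr0.
subst j.
have Ec : forall m, cu J u m = cu J v m.
  move=> m; have := congr1 (fun p : {perm Xt n} => p (m - i, 0)) E.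
  rewrite /= !fBE /= => /(congr1 snd) /=.
  have -> : i + (m - i) = m by ring.
  by move/eqP; rewrite !sub0r eqr_opp => /eqP.
have : [ffun k => u k - v k] = vzero n.
  apply: Hns => w; rewrite bform_cu big1 // => l _.
  rewrite /cu.
  have -> : \sum_k [ffun k0 => u k0 - v k0] k * J (l - k) = cu J u l - cu J v l.
    by rewrite /cu -sumrB; apply: eq_bigr => k _; rewrite ffunE mulrBl.
  by rewrite Ec subrr mulr0.
move/ffunP => H; congr (_, _); apply/ffunP => k.
by have := H k; rewrite !ffunE => /eqP; rewrite subr_eq0 => /eqP.
Qed.

End BS2.

Section BS3.
Variables (n : nat) (J : 'Z_n -> 'Z_n).

Definition Fset : {set {perm Xt n}} := [set fB J a | a : Bt n].

Lemma Fset_group : group_set Fset.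
Proof.
apply/group_setP; split; first by apply/imsetP; exists (vzero n, 0) => //; rewrite fB0.
move=> p q /imsetP [a _ ->] /imsetP [b _ ->].
by apply/imsetP; exists (Bcirc b a) => //; rewrite fB_circ.
Qed.

Lemma calG_sub_Fset : calG J \subset Fset.
Proof.
rewrite /calG (gen_subG _ (Group Fset_group)) /=.
apply/subsetP => p /imsetP [x _ ->]; apply/imsetP; exists (emb x) => //.
by rewrite fB_emb.
Qed.

Lemma sig_in (x : Xt n) : sigma J x \in calG J.
Proof. by rewrite /calG; apply: mem_gen; apply/imsetP; exists x. Qed.

Lemma fB_mult_in m (k : 'Z_n) : fB J ([ffun j => (j == k)%:R *+ m], 0) \in calG J.
Proof.
elim: m => [|m IH].
  have -> : [ffun j : 'Z_n => (j == k)%:R *+ 0] = vzero n by apply/ffunP => j; rewrite !ffunE mulr0n.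
  by rewrite fB0 group1.
have -> : ([ffun j : 'Z_n => (j == k)%:R *+ m.+1], 0)
   = Bcirc ([ffun j : 'Z_n => (j == k)%:R *+ m], 0) (emb (k, 0)).
  rewrite /Bcirc /emb /= alpha0 addr0; congr (_, _).
  by apply/ffunP => j; rewrite !ffunE mulrSr.
by rewrite fB_circ fB_emb groupM // sig_in.
Qed.

Lemma fB_u0_in (s : seq 'Z_n) (u : vec n) :
  (forall k, k \notin s -> u k = 0) -> fB J (u, 0) \in calG J.
Proof.
elim: s u => [|k s IH] u Hu.
  have -> : u = vzero n by apply/ffunP => j; rewrite ffunE Hu.
  by rewrite fB0 group1.
pose w : vec n := [ffun j => (j == k)%:R *+ (u k : nat)].
pose u' : vec n := [ffun j => u j - w j].
have -> : (u, 0) = Bcirc (u', 0) (w, 0).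
  rewrite /Bcirc /= alpha0 addr0; congr (_, _).
  by apply/ffunP => j; rewrite !ffunE subrK.
rewrite fB_circ groupM // ?fB_mult_in // IH // => j Hj.
rewrite !ffunE; have [->|Hjk] := eqVneq j k.
  by rewrite -mulrnA mul1n natr_Zp subrr.
rewrite Hu; last by rewrite in_cons negb_or Hjk.
by rewrite mul0rn subrr.
Qed.

Lemma Fset_sub_calG : Fset \subset calG J.
Proof.
apply/subsetP => p /imsetP [[u i] _ ->].
have -> : (u, i) = Bcirc (u, 0) (vzero n, i).
  rewrite /Bcirc /= alpha0 add0r; congr (_, _).
  by apply/ffunP => j; rewrite !ffunE addr0.
rewrite fB_circ groupM //; last by apply: (fB_u0_in (s := enum 'Z_n)) => k; rewrite mem_enum.
have E : emb (0, i) = Bcirc (emb (0, 0)) (vzero n, i).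
  rewrite /Bcirc /emb /= alpha0 add0r; congr (_, _).
  by apply/ffunP => j; rewrite !ffunE addr0.
have := congr1 (fB J) E; rewrite fB_emb fB_circ fB_emb => E2.
have -> : fB J (vzero n, i) = (sigma J (0, i) * (sigma J (0, 0))^-1)%g.
  by rewrite E2 mulgK.
by rewrite groupM ?groupV ?sig_in.
Qed.

End BS3.

Lemma free_ind (T : finType) (G : zmodType) (iota : T -> G) (P : G -> Prop) :
  (forall g, exists c : {ffun T -> int}, g = \sum_x iota x *~ c x) ->
  P 0 -> (forall h y, P h -> P (h + iota y)) -> (forall h y, P h -> P (h - iota y)) ->
  forall g, P g.
Proof.
move=> Hgen P0 Pp Pm g; have [c ->] := Hgen g.
have Hn : forall h y m, P h -> P (h + iota y *+ m) /\ P (h - iota y *+ m).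
  move=> h y m Ph; elim: m => [|m [IH1 IH2]]; first by rewrite mulr0n addr0 subr0.
  split; first by rewrite mulrSr addrA; apply: Pp.
  by rewrite mulrSr opprD addrA; apply: Pm.
have Hz : forall h y (k : int), P h -> P (h + iota y *~ k).
  move=> h y [m|m] Ph; first by rewrite -pmulrn; case: (Hn h y m Ph).
  by rewrite NegzE mulrNz -pmulrn; case: (Hn h y m.+1 Ph).
suff H : forall s h, P h -> P (h + \sum_(x <- s) iota x *~ c x).
  by rewrite -[X in P X]add0r; apply: H.
elim=> [|x s IH] h Ph; first by rewrite big_nil addr0.
by rewrite big_cons addrA; apply: IH; apply: Hz.
Qed.

Section GS.
Variables (T : finType) (G : zmodType) (circ : G -> G -> G) (iota : T -> G)
  (phi : G -> {perm T}) (s : T -> {perm T}).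
Hypotheses (Hb : is_left_brace circ)
  (Hlam : forall x y, brace_lam circ (iota x) (iota y) = iota (s x y))
  (HphiI : forall x, phi (iota x) = s x)
  (HphiM : forall a b, phi (circ a b) = (phi b * phi a)%g)
  (Hgen : forall g, exists c : {ffun T -> int}, g = \sum_x iota x *~ c x).

Local Notation lam := (brace_lam circ).

Lemma circA : associative circ. Proof. by case: Hb => [[]]. Qed.

Lemma circ_a0 a : circ a 0 = a.
Proof.
by have := Hb.2 a 0 0; rewrite addr0 => /addrI.
Qed.

Lemma circ_0a a : circ 0 a = a.
Proof.
case: Hb => [[_ [e [He1 [He2 _]]]] _].
have : e = 0 by rewrite -(circ_a0 e) He1.
by move=> E; rewrite -E He1.
Qed.

Lemma circ_inv a : exists a', circ a a' = 0 /\ circ a' a = 0.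
Proof.
case: Hb => [[_ [e [He1 [He2 Hi]]]] _].
have E : e = 0 by rewrite -(circ_a0 e) He1.
by rewrite -E.
Qed.

Lemma phi0 : phi 0 = 1%g.
Proof.
have := HphiM 0 0; rewrite circ_0a => H.
by apply: (mulgI (phi 0)); rewrite mulg1 -H.
Qed.

Lemma circ_lam a c : circ a c = a + lam a c.
Proof. by rewrite /brace_lam addrA subrr add0r. Qed.

Lemma lamD a b c : lam a (b + c) = lam a b + lam a c.
Proof.
rewrite /brace_lam.
have -> : circ a (b + c) = circ a b + circ a c - a by rewrite -(Hb.2 a b c) addrK.
by rewrite !addrA [RHS]addrAC.
Qed.

Lemma lam_a0 a : lam a 0 = 0.
Proof. by rewrite /brace_lam circ_a0 addNr. Qed.

Lemma lamN a b : lam a (- b) = - lam a b.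
Proof.
apply: (addrI (lam a b)); by rewrite -lamD !subrr lam_a0.
Qed.

Lemma lam0 c : lam 0 c = c.
Proof. by rewrite /brace_lam circ_0a oppr0 add0r. Qed.

Lemma lamM a b c : lam (circ a b) c = lam a (lam b c).
Proof.
rewrite [lam b c]/brace_lam lamD lamN /brace_lam circA opprD opprK.
by rewrite [RHS]addrA [a - _ - _]addrAC subrr add0r.
Qed.

Lemma lam_inj a : injective (lam a).
Proof.
move=> b c; rewrite /brace_lam => /addrI E.
have [a' [_ H2]] := circ_inv a.
by rewrite -(circ_0a b) -(circ_0a c) -H2 -!circA E.
Qed.

Definition SP g := forall y, lam g (iota y) = iota (phi g y).

Lemma S_iota x : SP (iota x).
Proof. by move=> y; rewrite Hlam HphiI. Qed.

Lemma S_circ a b : SP a -> SP b -> SP (circ a b).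
Proof. by move=> Ha Hb' y; rewrite lamM Hb' Ha HphiM permM. Qed.

Lemma S_inv a a' : SP a -> circ a a' = 0 -> SP a'.
Proof.
move=> Ha H y; apply: (@lam_inj a).
rewrite -lamM H lam0 Ha -permM -HphiM H phi0 perm1 //.
Qed.

Lemma phi_inv a a' : circ a a' = 0 -> phi a' = (phi a)^-1%g.
Proof.
move=> H; have := HphiM a a'; rewrite H phi0 => /esym E.
by rewrite -(mulg1_eq E) invgK.
Qed.

Lemma G_plus h y : SP h ->
  phi (h + iota y) = (s ((phi h)^-1%g y) * phi h)%g /\ SP (h + iota y).
Proof.
move=> Sh; have E : h + iota y = circ h (iota ((phi h)^-1%g y)).
  by rewrite circ_lam Sh permKV.
by rewrite E HphiM HphiI; split=> //; apply: S_circ => //; apply: S_iota.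
Qed.

Lemma G_neg z w : s w z = w -> exists w',
  - iota z = w' /\ SP w' /\ phi w' = (s w)^-1%g.
Proof.
move=> Hw; have [w' [H1 H2]] := circ_inv (iota w).
have Sw' : SP w' := S_inv (S_iota w) H1.
have Pw' : phi w' = (s w)^-1%g by rewrite (phi_inv H1) HphiI.
exists w'; split=> //.
have := H2; rewrite circ_lam Sw' Pw' -{2}Hw permK => /eqP.
by rewrite addr_eq0 => /eqP ->.
Qed.

Lemma G_minus h y w : SP h -> s w ((phi h)^-1%g y) = w ->
  phi (h - iota y) = ((s w)^-1 * phi h)%g /\ SP (h - iota y).
Proof.
move=> Sh Hw; have [w' [E1 [Sw' Pw']]] := G_neg Hw.
have E : h - iota y = circ h w'.
  by rewrite circ_lam -E1 lamN Sh permKV.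
by rewrite E HphiM Pw'; split=> //; apply: S_circ.
Qed.

Hypothesis (Hw : forall z, exists w, s w z = w).

Lemma S_all g : SP g.
Proof.
apply: (free_ind Hgen).
- by move=> y; rewrite lam0 phi0 perm1.
- by move=> h y Sh; case: (G_plus y Sh).
- move=> h y Sh; have [w Hw'] := Hw ((phi h)^-1%g y).
  by case: (G_minus Sh Hw').
Qed.

End GS.

Lemma sigma_fix (n : nat) (J : 'Z_n -> 'Z_n) (z : Xt n) :
  exists w, sigma J w z = w.
Proof.
exists (z.1 + z.2 - J 0, z.2 - J 0); rewrite /sigma permE /sigma_fun /=.
have -> : z.2 - J 0 + z.1 = z.1 + z.2 - J 0 by ring.
by rewrite subrr.
Qed.

Theorem mainTheorem14 (n : nat) (J : 'Z_n -> 'Z_n) :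
  (1 < n)%N ->
  (forall i : 'Z_n, J i = J (- i)%R) ->
  forall add : {perm Xt n} -> {perm Xt n} -> {perm Xt n},
    natural_add J add ->
    (brace_iso_B_calG J add <-> nonsingular J).
Proof.
move=> _ _ add [G [circ [iota [phi [Hb [Hbij [Hlam [HphiI [HphiM HphiA]]]]]]]]].
have Hgen : forall g, exists c : {ffun Xt n -> int}, g = \sum_x iota x *~ c x.
  by case: Hbij => g0 K1 K2 g; exists (g0 g); rewrite K2.
split.
  move=> [f [Hin Hinj Hsurj _ _]] u Hu.
  case: (eqVneq u (vzero n)) => // Hne; exfalso.
  have E : fB J (u, 0) = fB J (vzero n, 0).
    apply/permP => y; rewrite !fBE /= cu_zero -bform_ev Hu //.
  have H1 : (#|Fset J| < #|{: Bt n}|)%N.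
    rewrite ltn_neqAle; apply/andP; split; last exact: leq_imset_card.
    apply/negP => /imset_injP Hi.
    have := Hi (u, 0) (vzero n, 0) isT isT E; case => /eqP; exact/negP.
  have H2 : (#|{: Bt n}| <= #|calG J|)%N.
    rewrite -(card_imset predT Hinj); apply: subset_leq_card.
    by apply/subsetP => p /imsetP [a _ ->]; apply: Hin.
  have H3 : (#|calG J| <= #|Fset J|)%N by apply: subset_leq_card; apply: calG_sub_Fset.
  by have := leq_trans H2 H3; rewrite leqNgt H1.
move=> Hns.
have finj := fB_inj Hns.
have Sall := S_all Hb Hlam HphiI HphiM Hgen (@sigma_fix n J).
have Rp : forall h c y, phi h = fB J c -> phi (h + iota y) = fB J (Badd J c (emb y)).
  move=> h c y Hc; have [-> _] := G_plus Hb Hlam HphiI HphiM y (Sall h).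
  by rewrite (Bplus (x := ((fB J c)^-1)%g y)) ?permKV // Hc.
have Rm : forall h c y, phi h = fB J c -> phi (h - iota y) = fB J (Badd J c (nY J y)).
  move=> h c y Hc; have [w Hw] := sigma_fix J ((phi h)^-1%g y).
  have [-> _] := G_minus Hb Hlam HphiI HphiM (Sall h) Hw.
  by rewrite (Bminus (z := ((phi h)^-1)%g y) (w := w)) ?Hc ?permKV // -Hc.
have Ptot : forall g, exists c, phi g = fB J c.
  apply: (free_ind Hgen).
  - by exists (vzero n, 0); rewrite fB0 (phi0 Hb HphiM).
  - by move=> h y [c Hc]; exists (Badd J c (emb y)); apply: Rp.
  - by move=> h y [c Hc]; exists (Badd J c (nY J y)); apply: Rm.
have Q : forall h c, phi h = fB J c -> forall g a, phi g = fB J a ->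
    phi (g + h) = fB J (Badd J a c).
  apply: (free_ind Hgen).
  - move=> c Hc g a Ha.
    have -> : c = (vzero n, 0) by apply: finj; rewrite -Hc fB0 (phi0 Hb HphiM).
    by rewrite addr0 Badd0.
  - move=> h y IH c Hc g a Ha; have [c' Hc'] := Ptot h.
    have -> : c = Badd J c' (emb y) by apply: finj; rewrite -Hc (Rp _ _ _ Hc').
    by rewrite addrA -Badd_assoc; apply: Rp; apply: IH.
  - move=> h y IH c Hc g a Ha; have [c' Hc'] := Ptot h.
    have -> : c = Badd J c' (nY J y) by apply: finj; rewrite -Hc (Rm _ _ _ Hc').
    by rewrite addrA -Badd_assoc; apply: Rm; apply: IH.
have Psurj : forall a, exists g, phi g = fB J a.
  move=> a.
  have : fB J a \in calG J.
    by apply: (subsetP (Fset_sub_calG J)); apply/imsetP; exists a.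
  move: (fB J a) => p /gen_prodgP [m [c Hc ->]].
  elim: m c Hc => [|m IH] c Hc; first by exists 0; rewrite big_ord0 (phi0 Hb HphiM).
  have [g Hg] := IH (fun i => c (widen_ord (leqnSn m) i)) (fun i => Hc _).
  have /imsetP [x _ Hx] := Hc ord_max.
  exists (circ (iota x) g); rewrite big_ord_recr /= HphiM Hg HphiI Hx.
  done.
exists (fB J); split.
- by move=> a; apply: (subsetP (Fset_sub_calG J)); apply/imsetP; exists a.
- exact: finj.
- move=> g Hg; have := subsetP (calG_sub_Fset J) g Hg.
  by case/imsetP => a _ ->; exists a.
- move=> a b; have [g Hg] := Psurj a; have [h Hh] := Psurj b.
  by rewrite -(Q h b Hh g a Hg) HphiA Hg Hh.
- exact: fB_circ.
Qed.
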